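(* In the setting of the context, suppose every subcontroller is $u_i=\hat K_iR_i\begin{bmatrix} y_i\\ v_i\end{bmatrix}$ with $R_i=\begin{bmatrix} I&-G_{y_iv_i}\end{bmatrix}$ and $\hat K_i$ a stabilizing controller for $G_{y_iu_i}$, and let $\boldsymbol L$ be an interaction for which $\boldsymbol G_{\rm pre}$ is internally stable. Let $\delta\ge0$ satisfy $\|\boldsymbol G_{\boldsymbol{zv}}(I-\boldsymbol L\boldsymbol G_{\boldsymbol{wv}})^{-1}\boldsymbol L\|_\infty\le\delta$. If for each $i$ $$\|\hat M_{z_id_i}(\hat K_i)\|_\infty\le\alpha_i,\qquad \|\hat M_{w_id_i}(\hat K_i)\|_\infty\le\beta_i,$$ then the closed-loop map $\boldsymbol T_{\boldsymbol{zd}}:\boldsymbol d\mapsto\boldsymbol z$ of the entire network system satisfies $$\|\boldsymbol T_{\boldsymbol{zd}}\|_\infty\le\max_i\alpha_i+\delta\max_i\beta_i.$$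
   Context: For $i=1,\dots,N$, subsystem $G_i$ is a proper real rational transfer matrix with inputs $(v_i,d_i,u_i)$ (interaction, disturbance, control) and outputs $(w_i,z_i,y_i)$ (interaction, evaluation, measurement), $G_{a_ib_i}$ the block from $b_i$ to $a_i$; $v_i$ is measurable. Stacked signals $\boldsymbol v=\mathrm{col}(v_1,\dots,v_N)$ etc.; interaction $\boldsymbol v=\boldsymbol L\boldsymbol w$, $\boldsymbol L$ proper real rational. $\boldsymbol G_{\boldsymbol{wv}}:=\mathrm{diag}(G_{w_iv_i})$, $\boldsymbol G_{\boldsymbol{zv}}:=\mathrm{diag}(G_{z_iv_i})$. The preexisting system $\boldsymbol G_{\rm pre}$ is the loop $\boldsymbol w=\boldsymbol G_{\boldsymbol{wv}}\boldsymbol v$, $\boldsymbol v=\boldsymbol L\boldsymbol w$. All feedback systems are well-posed. $\hat M_{z_id_i}(\hat K_i):=G_{z_id_i}+G_{z_iu_i}\hat K_i(I-G_{y_iu_i}\hat K_i)^{-1}G_{y_id_i}$, $\hat M_{w_id_i}(\hat K_i):=G_{w_id_i}+G_{w_iu_i}\hat K_i(I-G_{y_iu_i}\hat K_i)^{-1}G_{y_id_i}$. $\hat K_i$ is a stabilizing controller for $G_{y_iu_i}$ if the positive feedback loop $y_i=G_{y_iu_i}u_i$, $u_i=\hat K_iy_i$ is internally stable. $\|\cdot\|_\infty$ is the $\mathcal H_\infty$-norm. *)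

(* Defs.v *)
From HB Require Import structures.
From mathcomp Require Import all_boot all_order all_algebra.
From mathcomp Require Import fraction.
Set Implicit Arguments. Unset Strict Implicit. Unset Printing Implicit Defensive.
Import Order.TTheory GRing.Theory Num.Theory.
Local Open Scope ring_scope.

(* Transfer functions are elements of the field of rational functions over a
   numeric closed field C (playing the role of the complex numbers); the
   Laplace variable s ranges over C. *)
Notation ratf C := {fraction {poly C}}.

Section TF.
Variable C : numClosedFieldType.

Definition rat_repr (f : ratf C) (p q : {poly C}) :=
  q != 0 /\ f = (tofrac p) / (tofrac q).

Definition real_rat (f : ratf C) :=
  exists p q, rat_repr f p q /\ p \is a polyOver Num.real /\ q \is a polyOver Num.real.

Definition proper_rat (f : ratf C) :=
  exists p q, rat_repr f p q /\ (size p <= size q)%N.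

Definition nopole (f : ratf C) (s : C) :=
  exists p q, rat_repr f p q /\ q.[s] != 0.

Definition has_value (f : ratf C) (s c : C) :=
  exists p q, rat_repr f p q /\ q.[s] != 0 /\ c = p.[s] / q.[s].

(* stable (element of RH_infinity): proper, no poles in closed right half plane *)
Definition stable_rat (f : ratf C) :=
  proper_rat f /\ forall s : C, 0 <= 'Re s -> nopole f s.

Definition real_rat_mx m n (G : 'M[ratf C]_(m, n)) := forall i j, real_rat (G i j).
Definition proper_mx m n (G : 'M[ratf C]_(m, n)) := forall i j, proper_rat (G i j).
Definition stable_mx m n (G : 'M[ratf C]_(m, n)) := forall i j, stable_rat (G i j).
Definition mx_value m n (G : 'M[ratf C]_(m, n)) (s : C) (A : 'M[C]_(m, n)) :=
  forall i j, has_value (G i j) s (A i j).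

Definition vnorm2 n (x : 'cV[C]_n) : C := \sum_i `|x i 0| ^+ 2.

(* ||G||_oo <= gamma, where ||G||_oo = sup_w sigma_max(G(jw)) for G in RH_oo
   (and +oo for G not in RH_oo). sigma_max(A) <= gamma is written out as the
   induced 2-norm bound |A x|^2 <= gamma^2 |x|^2. *)
Definition hinf_le m n (G : 'M[ratf C]_(m, n)) (gamma : C) :=
  0 <= gamma /\ stable_mx G /\
  forall w : C, w \is Num.real ->
  forall A : 'M[C]_(m, n), mx_value G (w * 'i) A ->
  forall x : 'cV[C]_n, vnorm2 (A *m x) <= gamma ^+ 2 * vnorm2 x.

(* K stabilizing controller for G in the positive feedback loop
   y = G u + e1, u = K y + e2: the loop map (e1,e2) |-> (y,u) exists and is stable. *)
Definition int_stable_loop m n (G : 'M[ratf C]_(m, n)) (K : 'M[ratf C]_(n, m)) :=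
  let M := block_mx (1%:M : 'M_m) (- G) (- K) (1%:M : 'M_n) in
  M \in unitmx /\ stable_mx (invmx M).

Definition Mhat ma md mu my (Gad : 'M[ratf C]_(ma, md)) (Gau : 'M[ratf C]_(ma, mu))
  (Gyd : 'M[ratf C]_(my, md)) (Gyu : 'M[ratf C]_(my, mu)) (K : 'M[ratf C]_(mu, my)) :=
  Gad + Gau *m K *m invmx (1%:M - Gyu *m K) *m Gyd.

Definition bdiag N (p q : 'I_N -> nat) (B : forall i, 'M[ratf C]_(p i, q i)) :
  'M[ratf C]_(\sum_i p i, \sum_i q i) :=
  mxblock (fun i j => if i == j then conform_mx 0 (B i) else 0).

End TF.

(* max_i a_i (folded from 0; all a_i are >= 0 in the application) *)
Definition bigmax (C : numClosedFieldType) N (a : 'I_N -> C) : C :=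
  \big[Num.max/0]_(i < N) a i.

(* Main.v *)
Require Import Defs.
From HB Require Import structures.
From mathcomp Require Import all_boot all_order all_algebra.
From mathcomp Require Import fraction.
From mathcomp Require Import ring zify.
Import Order.TTheory GRing.Theory Num.Theory.
Local Open Scope ring_scope.
Set Implicit Arguments. Unset Strict Implicit. Unset Printing Implicit Defensive.


Lemma fld_cross (F : fieldType) (P Q P' Q' : F) : Q != 0 -> Q' != 0 ->
  P / Q = P' / Q' -> P * Q' = P' * Q.
Proof. move=> h1 h2 e. have -> : P = P' / Q' * Q by rewrite -e divfK.
field. by rewrite h2. Qed.

Lemma fld_add (F : fieldType) (P Q P' Q' : F) : Q != 0 -> Q' != 0 ->
  P / Q + P' / Q' = (P * Q' + P' * Q) / (Q * Q').
Proof. move=> h1 h2; field; by rewrite h1 h2. Qed.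

Lemma fld_mul (F : fieldType) (P Q P' Q' : F) :
  P / Q * (P' / Q') = (P * P') / (Q * Q').
Proof. by rewrite invfM mulrACA. Qed.

Section Sc.
Variable C : numClosedFieldType.
Implicit Types (f g : ratf C) (s : C).

Lemma frac_nz {q : {poly C}} : q != 0 -> tofrac q != 0 :> ratf C.
Proof. by rewrite tofrac_eq0. Qed.

Lemma hv_uniq f s a b : has_value f s a -> has_value f s b -> a = b.
Proof.
move=> [p [q [[q0 ->] [qs ->]]]] [p' [q' [[q0' e] [qs' ->]]]].
have : tofrac (p * q') = tofrac (p' * q) :> ratf C.
  by rewrite !tofracM; apply: fld_cross e; apply: frac_nz.
move/eqP; rewrite tofrac_eq => /eqP /(congr1 (fun r => r.[s])); rewrite !hornerM => h.
by apply/eqP; rewrite eqr_div // h.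
Qed.

Lemma hv_add f g s a b : has_value f s a -> has_value g s b -> has_value (f + g) s (a + b).
Proof.
move=> [p [q [[q0 ->] [qs ->]]]] [p' [q' [[q0' ->] [qs' ->]]]].
exists (p * q' + p' * q), (q * q'); split; [split|split].
- by rewrite mulf_neq0.
- by rewrite tofracD !tofracM fld_add // frac_nz.
- by rewrite hornerM mulf_neq0.
- by rewrite hornerD !hornerM fld_add.
Qed.

Lemma hv_mul f g s a b : has_value f s a -> has_value g s b -> has_value (f * g) s (a * b).
Proof.
move=> [p [q [[q0 ->] [qs ->]]]] [p' [q' [[q0' ->] [qs' ->]]]].
exists (p * p'), (q * q'); split; [split|split].
- by rewrite mulf_neq0.
- by rewrite !tofracM fld_mul.
- by rewrite hornerM mulf_neq0.
- by rewrite !hornerM fld_mul.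
Qed.

Lemma hv_const (c : C) s : has_value (tofrac c%:P) s c.
Proof.
exists c%:P, 1; split; [split|split].
- exact: oner_neq0.
- by rewrite tofrac1 divr1.
- by rewrite hornerC oner_neq0.
- by rewrite !hornerC divr1.
Qed.

Lemma hv0 s : has_value 0 s 0.
Proof. by have := hv_const 0 s; rewrite tofrac0. Qed.
Lemma hv1 s : has_value 1 s 1.
Proof. by have := hv_const 1 s; rewrite tofrac1. Qed.
Lemma hvN f s a : has_value f s a -> has_value (- f) s (- a).
Proof.
move=> h; have := hv_mul (hv_const (-1) s) h.
by rewrite polyCN tofracN polyC1 tofrac1 !mulN1r.
Qed.
Lemma hv_nat n s : has_value n%:R s n%:R.
Proof. elim: n => [|n IH]; first exact: hv0. by rewrite !mulrS; apply: hv_add=> //; apply: hv1. Qed.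

Lemma nopole_hv f s : nopole f s <-> exists a, has_value f s a.
Proof.
split=> [[p [q [r qs]]]|[a [p [q [r [qs _]]]]]]; last by exists p, q.
by exists (p.[s] / q.[s]), p, q.
Qed.


Lemma proper_add f g : proper_rat f -> proper_rat g -> proper_rat (f + g).
Proof.
move=> [p [q [[q0 ->] sz]]] [p' [q' [[q0' ->] sz']]].
exists (p * q' + p' * q), (q * q'); split; first split.
- by rewrite mulf_neq0.
- by rewrite tofracD !tofracM fld_add // frac_nz.
rewrite size_mul //; apply: leq_trans; first exact: size_polyD; rewrite geq_max.
apply/andP; split; (apply: leq_trans; first exact: size_mul_leq); rewrite -!subn1; apply: leq_sub2r; [exact: leq_add | by rewrite addnC leq_add2l].
Qed.

Lemma proper_mul f g : proper_rat f -> proper_rat g -> proper_rat (f * g).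
Proof.
move=> [p [q [[q0 ->] sz]]] [p' [q' [[q0' ->] sz']]].
exists (p * p'), (q * q'); split; first split.
- by rewrite mulf_neq0.
- by rewrite !tofracM fld_mul.
rewrite [size (q * q')]size_mul //; apply: leq_trans; first exact: size_mul_leq.
rewrite -!subn1; apply: leq_sub2r; exact: leq_add.
Qed.

Lemma stable_add f g : stable_rat f -> stable_rat g -> stable_rat (f + g).
Proof.
move=> [pf hf] [pg hg]; split; first exact: proper_add.
move=> s hs; apply/nopole_hv.
have [a ha] := (nopole_hv f s).1 (hf s hs); have [b hb] := (nopole_hv g s).1 (hg s hs).
by exists (a + b); apply: hv_add.
Qed.

Lemma stable_mul f g : stable_rat f -> stable_rat g -> stable_rat (f * g).
Proof.
move=> [pf hf] [pg hg]; split; first exact: proper_mul.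
move=> s hs; apply/nopole_hv.
have [a ha] := (nopole_hv f s).1 (hf s hs); have [b hb] := (nopole_hv g s).1 (hg s hs).
by exists (a * b); apply: hv_mul.
Qed.

Lemma stable0 : stable_rat (0 : ratf C).
Proof.
split; last by move=> s _; apply/nopole_hv; exists 0; apply: hv0.
exists 0, 1; split; last by rewrite size_poly0.
by split; [exact: oner_neq0|rewrite tofrac0 mul0r].
Qed.

Lemma stable_mx_add m n (A B : 'M[ratf C]_(m, n)) :
  stable_mx A -> stable_mx B -> stable_mx (A + B).
Proof. by move=> hA hB i j; rewrite mxE; apply: stable_add. Qed.

Lemma stable_mx_mul m n k (A : 'M[ratf C]_(m, n)) (B : 'M[ratf C]_(n, k)) :
  stable_mx A -> stable_mx B -> stable_mx (A *m B).
Proof.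
move=> hA hB i j; rewrite mxE; apply: big_ind => //; first exact: stable0.
  by move=> x y; apply: stable_add.
by move=> l _; apply: stable_mul.
Qed.

Lemma mx_value_add m n (A B : 'M[ratf C]_(m, n)) s a b :
  mx_value A s a -> mx_value B s b -> mx_value (A + B) s (a + b).
Proof. by move=> hA hB i j; rewrite !mxE; apply: hv_add. Qed.

Lemma mx_value_mul m n k (A : 'M[ratf C]_(m, n)) (B : 'M[ratf C]_(n, k)) s a b :
  mx_value A s a -> mx_value B s b -> mx_value (A *m B) s (a *m b).
Proof.
move=> hA hB i j; rewrite !mxE.
apply: (big_ind2 (fun x y => has_value x s y)); first exact: hv0.
  by move=> x1 x2 y1 y2; apply: hv_add.
by move=> l _; apply: hv_mul.
Qed.

Lemma mx_value_uniq m n (A : 'M[ratf C]_(m, n)) s a b :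
  mx_value A s a -> mx_value A s b -> a = b.
Proof. by move=> ha hb; apply/matrixP => i j; apply: hv_uniq (ha i j) (hb i j). Qed.

Lemma stable_mx_value m n (A : 'M[ratf C]_(m, n)) s :
  stable_mx A -> 0 <= 'Re s -> exists a, mx_value A s a.
Proof.
move=> hA hs.
have h : forall i j, exists c, has_value (A i j) s c.
  by move=> i j; apply/nopole_hv; apply: (hA i j).2.
have h2 : forall i, exists fi : 'I_n -> C, forall j, has_value (A i j) s (fi j).
    by move=> i; apply: (@fin_all_exists _ (fun _ => C) (fun j c => has_value (A i j) s c)).
have [F hF] := @fin_all_exists _ (fun _ => 'I_n -> C)
   (fun i fi => forall j, has_value (A i j) s (fi j)) h2.
by exists (\matrix_(i, j) F i j) => i j; rewrite mxE.
Qed.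

End Sc.


Definition bdg (R : pzRingType) N (p q : 'I_N -> nat) (B : forall i, 'M[R]_(p i, q i)) :
  'M[R]_(\sum_i p i, \sum_i q i) :=
  mxblock (fun i j => if i == j then conform_mx 0 (B i) else 0).

Lemma bdiagE (C : numClosedFieldType) N (p q : 'I_N -> nat) (B : forall i, 'M[ratf C]_(p i, q i)) :
  bdiag B = bdg B.
Proof. by []. Qed.

Lemma bdg_mul (R : pzRingType) N (p q : 'I_N -> nat) (B : forall i, 'M[R]_(p i, q i)) k
  (x : 'M[R]_(\sum_i q i, k)) i : submxcol (bdg B *m x) i = B i *m submxcol x i.
Proof.
rewrite -{1}[x]submxcolK /bdg mul_mxblock_mxrow mxcolK (bigD1 i) //= eqxx conform_mx_id.
rewrite big1 ?addr0 // => j /negbTE; rewrite eq_sym => ->; exact: mul0mx.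
Qed.

Lemma conform_rel (T1 T2 : Type) (rel : T1 -> T2 -> Prop) m n m' n'
  (B1 : 'M[T1]_(m, n)) (B2 : 'M[T2]_(m, n)) (A1 : 'M[T1]_(m', n')) (A2 : 'M[T2]_(m', n')) :
  (forall a b, rel (B1 a b) (B2 a b)) -> (forall a b, rel (A1 a b) (A2 a b)) ->
  forall a b, rel (conform_mx B1 A1 a b) (conform_mx B2 A2 a b).
Proof.
move=> hB hA a b.
case: (eqVneq m' m) => [em|nm]; last by rewrite !nonconform_mx ?nm.
case: (eqVneq n' n) => [en|nn]; last by rewrite !nonconform_mx ?nn ?orbT.
by subst; rewrite !conform_mx_id.
Qed.

Lemma bdg_rel (R1 R2 : pzRingType) (rel : R1 -> R2 -> Prop) N (p q : 'I_N -> nat)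
  (B1 : forall i, 'M[R1]_(p i, q i)) (B2 : forall i, 'M[R2]_(p i, q i)) :
  rel 0 0 -> (forall i a b, rel (B1 i a b) (B2 i a b)) ->
  forall k l, rel (bdg B1 k l) (bdg B2 k l).
Proof.
move=> h0 hB k l; rewrite !mxE; case: eqP => _; last by rewrite !mxE.
by apply: conform_rel => a b; rewrite ?mxE.
Qed.

Section Nm.
Variable C : numClosedFieldType.
Definition vn2 n (x : 'cV[C]_n) : C := \sum_i `|x i 0| ^+ 2.
Lemma vnorm2_split N (p : 'I_N -> nat) (x : 'cV[C]_(\sum_i p i)) :
  vnorm2 x = \sum_i vnorm2 (submxcol x i).
Proof.
rewrite /vnorm2 sig_big_dep/= (reindex _ tagnat.rank_bij_on)/=.
apply: eq_bigr => -[i j] _; rewrite !mxE /=.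
by rewrite tagnat.rankE.
Qed.

Lemma vnorm2_ge0 n (x : 'cV[C]_n) : 0 <= vnorm2 x.
Proof. by apply: sumr_ge0 => i _; apply: exprn_ge0. Qed.

Lemma sq_tri (p q t : C) : 0 < t ->
  `|p + q| ^+ 2 <= (1 + t) * `|p| ^+ 2 + (1 + t^-1) * `|q| ^+ 2.
Proof.
move=> t0; rewrite -subr_ge0.
have tr : t^* = t by apply: conj_Creal; apply: gtr0_real.
have -> : (1 + t) * `|p| ^+ 2 + (1 + t^-1) * `|q| ^+ 2 - `|p + q| ^+ 2
    = `|t * p - q| ^+ 2 / t.
  rewrite !normCK !rmorphD rmorphN !rmorphM /= tr.
  have tn : t != 0 by rewrite gt_eqF.
  by field.
by apply: divr_ge0; [apply: exprn_ge0|apply: ltW].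
Qed.

Lemma vn_tri n (u v : 'cV[C]_n) (t : C) : 0 < t ->
  vnorm2 (u + v) <= (1 + t) * vnorm2 u + (1 + t^-1) * vnorm2 v.
Proof.
move=> t0; rewrite /vnorm2 !mulr_sumr -big_split /=.
by apply: ler_sum => i _; rewrite mxE; apply: sq_tri.
Qed.

Lemma vn0 n (u : 'cV[C]_n) : vnorm2 u <= 0 -> u = 0.
Proof.
move=> h; have : vnorm2 u = 0 by apply/eqP; rewrite eq_le h vnorm2_ge0.
move/psumr_eq0P => H; apply/matrixP => i j; rewrite (ord1 j) mxE.
have := H (fun i _ => exprn_ge0 _ (normr_ge0 _)) i isT; move/eqP.
by rewrite expf_eq0 /= normr_eq0 => /eqP.
Qed.

Lemma vn_comb n (u v : 'cV[C]_n) (a b X : C) : 0 <= a -> 0 <= b ->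
  vnorm2 u <= a ^+ 2 * X -> vnorm2 v <= b ^+ 2 * X ->
  vnorm2 (u + v) <= (a + b) ^+ 2 * X.
Proof.
rewrite le0r => /orP [/eqP a0|a0]; rewrite le0r => /orP [/eqP b0|b0].
- subst; rewrite addr0 expr0n /= mul0r => /vn0 -> /vn0 ->.
  by rewrite addr0 /vnorm2 big1 // => i _; rewrite mxE normr0 expr0n.
- by subst; rewrite add0r expr0n /= mul0r => /vn0 ->; rewrite add0r.
- by subst; rewrite addr0 [0 ^+ 2]expr0n /= mul0r => hu /vn0 ->; rewrite addr0.
move=> hu hv; have t0 : 0 < b / a by apply: divr_gt0.
apply: le_trans (vn_tri u v t0) _.
have -> : (a + b) ^+ 2 * X = (1 + b / a) * (a ^+ 2 * X) + (1 + (b / a)^-1) * (b ^+ 2 * X).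
  have an : a != 0 by rewrite gt_eqF.
  have bn : b != 0 by rewrite gt_eqF.
  by field; rewrite an bn.
apply: lerD; apply: ler_wpM2l => //; apply: addr_ge0 => //; rewrite ?invr_ge0 ltW // divr_gt0 //.
Qed.

Lemma bdg_norm N (p q : 'I_N -> nat) (A : forall i, 'M[C]_(p i, q i)) (al : 'I_N -> C) m :
  (forall i, 0 <= al i) -> (forall i, al i <= m) ->
  (forall i (x : 'cV[C]_(q i)), vnorm2 (A i *m x) <= al i ^+ 2 * vnorm2 x) ->
  forall x, vnorm2 (bdg A *m x) <= m ^+ 2 * vnorm2 x.
Proof.
move=> h0 hm hA x; rewrite vnorm2_split (vnorm2_split x) mulr_sumr.
apply: ler_sum => i _; rewrite bdg_mul; apply: le_trans (hA i _) _.
apply: ler_wpM2r; first exact: vnorm2_ge0.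
rewrite !expr2; apply: ler_pM => //; exact: hm.
Qed.

Lemma max_ge (x y : C) : 0 <= x -> 0 <= y ->
  [/\ 0 <= Num.max x y, x <= Num.max x y & y <= Num.max x y].
Proof.
move=> hx hy; have cxy : (x >=< y)%O by apply: real_comparable; apply: ger0_real.
rewrite comparable_maxEge //; case: ifP => h; first by rewrite lexx.
by move: cxy; rewrite /Order.comparable h orbF => ->; rewrite lexx hy.
Qed.

Lemma bigmax_seq (I : eqType) (s : seq I) (F : I -> C) : (forall i, 0 <= F i) ->
  0 <= \big[Num.max/0]_(j <- s) F j /\ forall i, i \in s -> F i <= \big[Num.max/0]_(j <- s) F j.
Proof.
move=> hF; elim: s => [|x s [IH0 IH]]; first by rewrite big_nil.
rewrite big_cons; have [h1 h2 h3] := max_ge (hF x) IH0; split => // i.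
rewrite inE => /orP [/eqP -> //|/IH hi]; exact: le_trans hi h3.
Qed.

Lemma bigmax_ge0 N (al : 'I_N -> C) : (forall i, 0 <= al i) -> 0 <= bigmax al.
Proof. by move=> h; have [] := bigmax_seq (index_enum 'I_N) h. Qed.

Lemma bigmax_ub N (al : 'I_N -> C) : (forall i, 0 <= al i) -> forall i, al i <= bigmax al.
Proof. by move=> h i; have [_ H] := bigmax_seq (index_enum 'I_N) h; apply: H; rewrite mem_index_enum. Qed.
End Nm.


Lemma unit_loop (R : comUnitRingType) m n (G : 'M[R]_(m, n)) (K : 'M[R]_(n, m)) :
  block_mx 1%:M (-G) (-K) 1%:M \in unitmx ->
  (1%:M - K *m G \in unitmx) /\ (1%:M - G *m K \in unitmx).
Proof.
move=> hu.
have E1 : block_mx 1%:M (-G) (-K) 1%:M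
    = block_mx 1%:M 0 (-K) 1%:M *m block_mx 1%:M (-G) 0 (1%:M - K *m G).
  rewrite mulmx_block; congr block_mx; rewrite ?mul1mx ?mul0mx ?mulmx1 ?mulmx0 ?addr0 ?add0r //.
  by rewrite mulmxN mulNmx opprK addrC subrK.
have E2 : block_mx 1%:M (-G) (-K) 1%:M
    = block_mx 1%:M (-G) 0 1%:M *m block_mx (1%:M - G *m K) 0 (-K) 1%:M.
  rewrite mulmx_block; congr block_mx; rewrite ?mul1mx ?mul0mx ?mulmx1 ?mulmx0 ?addr0 ?add0r //.
  by rewrite mulNmx mulmxN opprK subrK.
move: hu; rewrite !unitmxE; split.
  by move: hu; rewrite E1 det_mulmx det_lblock det_ublock !det1 !mul1r => /unitrP [y [h1 h2]]; apply/unitrP; exists y.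
by move: hu; rewrite E2 det_mulmx det_lblock det_ublock !det1 !mul1r mulr1.
Qed.


Lemma loop_eq (R : comUnitRingType) a b c e k (K : 'M[R]_(a, b)) (Gyu : 'M[R]_(b, a))
  (Gyd : 'M[R]_(b, c)) (Gyv : 'M[R]_(b, e)) (d : 'M[R]_(c, k)) (v : 'M[R]_(e, k)) :
  1%:M - Gyu *m K \in unitmx ->
  K *m invmx (1%:M - Gyu *m K) *m Gyd *m d =
  K *m (row_mx 1%:M (- Gyv) *m col_mx (Gyv *m v + Gyd *m d
        + Gyu *m (K *m invmx (1%:M - Gyu *m K) *m Gyd *m d)) v).
Proof.
move=> hX; rewrite mul_row_col mul1mx mulNmx.
rewrite (_ : Gyv *m v + Gyd *m d + Gyu *m (K *m invmx (1%:M - Gyu *m K) *m Gyd *m d) - Gyv *m v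
   = Gyd *m d + Gyu *m (K *m invmx (1%:M - Gyu *m K) *m Gyd *m d)); last first.
  by rewrite addrC !addrA addNr add0r.
rewrite -!mulmxA; congr (K *m _).
set f := Gyd *m d.
have He : f = (1%:M - Gyu *m K) *m (invmx (1%:M - Gyu *m K) *m f) by rewrite mulKVmx.
by rewrite {2}He mulmxBl mul1mx !mulmxA subrK.
Qed.

Theorem proposition4 (C : numClosedFieldType) (N : nat)
  (nv nd nu nw nz ny : 'I_N -> nat)
  (Gwv : forall i, 'M[ratf C]_(nw i, nv i)) (Gwd : forall i, 'M[ratf C]_(nw i, nd i))
  (Gwu : forall i, 'M[ratf C]_(nw i, nu i))
  (Gzv : forall i, 'M[ratf C]_(nz i, nv i)) (Gzd : forall i, 'M[ratf C]_(nz i, nd i))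
  (Gzu : forall i, 'M[ratf C]_(nz i, nu i))
  (Gyv : forall i, 'M[ratf C]_(ny i, nv i)) (Gyd : forall i, 'M[ratf C]_(ny i, nd i))
  (Gyu : forall i, 'M[ratf C]_(ny i, nu i))
  (Khat : forall i, 'M[ratf C]_(nu i, ny i))
  (L : 'M[ratf C]_(\sum_i nv i, \sum_i nw i))
  (alpha beta : 'I_N -> C) (delta : C)
  (T : 'M[ratf C]_(\sum_i nz i, \sum_i nd i))
  (* each G_i is a proper real rational transfer matrix (all its blocks) *)
  (hG : forall i,
      (real_rat_mx (Gwv i) /\ real_rat_mx (Gwd i) /\ real_rat_mx (Gwu i) /\
       real_rat_mx (Gzv i) /\ real_rat_mx (Gzd i) /\ real_rat_mx (Gzu i) /\
       real_rat_mx (Gyv i) /\ real_rat_mx (Gyd i) /\ real_rat_mx (Gyu i)) /\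
      (proper_mx (Gwv i) /\ proper_mx (Gwd i) /\ proper_mx (Gwu i) /\
       proper_mx (Gzv i) /\ proper_mx (Gzd i) /\ proper_mx (Gzu i) /\
       proper_mx (Gyv i) /\ proper_mx (Gyd i) /\ proper_mx (Gyu i)))
  (* the controllers are proper real rational and stabilize G_{y_i u_i} *)
  (hKrat : forall i, real_rat_mx (Khat i) /\ proper_mx (Khat i))
  (hKstab : forall i, int_stable_loop (Gyu i) (Khat i))
  (* the interaction L is proper real rational and G_pre is internally stable *)
  (hL : real_rat_mx L /\ proper_mx L)
  (hpre : int_stable_loop (bdiag Gwv) L)
  (hdelta0 : 0 <= delta)
  (hdelta : hinf_le (bdiag Gzv *m invmx (1%:M - L *m bdiag Gwv) *m L) delta)
  (halpha : forall i, hinf_le (Mhat (Gzd i) (Gzu i) (Gyd i) (Gyu i) (Khat i)) (alpha i))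
  (hbeta : forall i, hinf_le (Mhat (Gwd i) (Gwu i) (Gyd i) (Gyu i) (Khat i)) (beta i))
  (* T is the closed-loop map d |-> z of the whole network system *)
  (hT : forall (d : 'cV[ratf C]_(\sum_i nd i)) (v : 'cV[ratf C]_(\sum_i nv i))
               (w : 'cV[ratf C]_(\sum_i nw i)) (z : 'cV[ratf C]_(\sum_i nz i))
               (y : 'cV[ratf C]_(\sum_i ny i)) (u : 'cV[ratf C]_(\sum_i nu i)),
      (forall i,
        [/\ submxcol w i = Gwv i *m submxcol v i + Gwd i *m submxcol d i
                           + Gwu i *m submxcol u i,
            submxcol z i = Gzv i *m submxcol v i + Gzd i *m submxcol d i
                           + Gzu i *m submxcol u i,
            submxcol y i = Gyv i *m submxcol v i + Gyd i *m submxcol d i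
                           + Gyu i *m submxcol u i &
            submxcol u i = Khat i *m (row_mx 1%:M (- Gyv i)
                                        *m col_mx (submxcol y i) (submxcol v i))]) ->
      v = L *m w ->
      z = T *m d) :
  hinf_le T (bigmax alpha + delta * bigmax beta).
Proof.
set Mz := bdiag (fun i => Mhat (Gzd i) (Gzu i) (Gyd i) (Gyu i) (Khat i)).
set Mw := bdiag (fun i => Mhat (Gwd i) (Gwu i) (Gyd i) (Gyu i) (Khat i)).
set D := bdiag Gzv *m invmx (1%:M - L *m bdiag Gwv) *m L.
have hX : forall i, 1%:M - Gyu i *m Khat i \in unitmx.
  by move=> i; have [hu _] := hKstab i; have [_ ->] := unit_loop hu.
have hY : 1%:M - L *m bdiag Gwv \in unitmx.
  by have [hu _] := hpre; have [-> _] := unit_loop hu.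
have HTd : forall d : 'cV[ratf C]_(\sum_i nd i), T *m d = (Mz + D *m Mw) *m d.
  move=> d.
  pose u := mxcol (fun i => Khat i *m invmx (1%:M - Gyu i *m Khat i) *m Gyd i *m submxcol d i).
  pose v := invmx (1%:M - L *m bdiag Gwv) *m L *m Mw *m d.
  pose w := mxcol (fun i => Gwv i *m submxcol v i + Gwd i *m submxcol d i + Gwu i *m submxcol u i).
  pose z := mxcol (fun i => Gzv i *m submxcol v i + Gzd i *m submxcol d i + Gzu i *m submxcol u i).
  pose y := mxcol (fun i => Gyv i *m submxcol v i + Gyd i *m submxcol d i + Gyu i *m submxcol u i).
  have hMw : forall i, Mhat (Gwd i) (Gwu i) (Gyd i) (Gyu i) (Khat i) *m submxcol d i
      = Gwd i *m submxcol d i + Gwu i *m submxcol u i.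
    by move=> i; rewrite /Mhat mulmxDl /u mxcolK !mulmxA.
  have hMz : forall i, Mhat (Gzd i) (Gzu i) (Gyd i) (Gyu i) (Khat i) *m submxcol d i
      = Gzd i *m submxcol d i + Gzu i *m submxcol u i.
    by move=> i; rewrite /Mhat mulmxDl /u mxcolK !mulmxA.
  have hw : w = bdiag Gwv *m v + Mw *m d.
    apply/mxcolP => i; rewrite /w mxcolK submxcolD /Mw !bdiagE !bdg_mul hMw.
    by rewrite addrA.
  have hz : z = bdiag Gzv *m v + Mz *m d.
    apply/mxcolP => i; rewrite /z mxcolK submxcolD /Mz !bdiagE !bdg_mul hMz.
    by rewrite addrA.
  have hv : v = L *m w.
    have hYv : (1%:M - L *m bdiag Gwv) *m v = L *m (Mw *m d).
      by rewrite /v -!mulmxA mulKVmx.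
    move: hYv; rewrite mulmxBl mul1mx => hYv.
    by rewrite hw mulmxDr mulmxA -hYv addrC subrK.
  have hall : forall i,
        [/\ submxcol w i = Gwv i *m submxcol v i + Gwd i *m submxcol d i
                           + Gwu i *m submxcol u i,
            submxcol z i = Gzv i *m submxcol v i + Gzd i *m submxcol d i
                           + Gzu i *m submxcol u i,
            submxcol y i = Gyv i *m submxcol v i + Gyd i *m submxcol d i
                           + Gyu i *m submxcol u i &
            submxcol u i = Khat i *m (row_mx 1%:M (- Gyv i)
                                        *m col_mx (submxcol y i) (submxcol v i))].
    move=> i; split; [by rewrite mxcolK|by rewrite mxcolK|by rewrite mxcolK|].
    rewrite /y /u !mxcolK; apply: loop_eq; exact: hX.
  have Hz := hT d v w z y u hall hv.
  by rewrite -Hz hz /v /D mulmxDl !mulmxA addrC.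
have HT : T = Mz + D *m Mw.
  apply/matrixP => a b; have := HTd (delta_mx b 0); rewrite -!colE.
  by move/(congr1 (fun M : 'cV[ratf C]_(\sum_i nz i) => M a 0)); rewrite !mxE.
have a0 : forall i, 0 <= alpha i by move=> i; exact: (halpha i).1.
have b0 : forall i, 0 <= beta i by move=> i; exact: (hbeta i).1.
have stMz : stable_mx Mz.
  move=> k l; exact: (@bdg_rel _ _ (fun f (_ : ratf C) => stable_rat f) _ _ _ _ _
     (stable0 C) (fun i => (halpha i).2.1) k l).
have stMw : stable_mx Mw.
  move=> k l; exact: (@bdg_rel _ _ (fun f (_ : ratf C) => stable_rat f) _ _ _ _ _
     (stable0 C) (fun i => (hbeta i).2.1) k l).
split; first by apply: addr_ge0; [exact: bigmax_ge0|apply: mulr_ge0 => //; exact: bigmax_ge0].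
split; first by rewrite HT; apply: stable_mx_add => //; apply: stable_mx_mul => //; exact: hdelta.2.1.
move=> w wr A hA x.
set s := w * 'i.
have hs : 0 <= 'Re s by rewrite /s (ReMl wr) Re_i mulr0.
have [az haz] : exists az : forall i, 'M[C]_(nz i, nd i),
    forall i, mx_value (Mhat (Gzd i) (Gzu i) (Gyd i) (Gyu i) (Khat i)) s (az i).
  apply: (@fin_all_exists _ (fun i => 'M[C]_(nz i, nd i))
     (fun i a => mx_value (Mhat (Gzd i) (Gzu i) (Gyd i) (Gyu i) (Khat i)) s a)) => i.
  exact: stable_mx_value (halpha i).2.1 hs.
have [aw haw] : exists aw : forall i, 'M[C]_(nw i, nd i),
    forall i, mx_value (Mhat (Gwd i) (Gwu i) (Gyd i) (Gyu i) (Khat i)) s (aw i).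
  apply: (@fin_all_exists _ (fun i => 'M[C]_(nw i, nd i))
     (fun i a => mx_value (Mhat (Gwd i) (Gwu i) (Gyd i) (Gyu i) (Khat i)) s a)) => i.
  exact: stable_mx_value (hbeta i).2.1 hs.
have [ad had] := stable_mx_value hdelta.2.1 hs.
have vMz : mx_value Mz s (bdg az).
  move=> k l; exact: (@bdg_rel _ _ (fun f c => has_value f s c) _ _ _ _ _ (hv0 s) haz k l).
have vMw : mx_value Mw s (bdg aw).
  move=> k l; exact: (@bdg_rel _ _ (fun f c => has_value f s c) _ _ _ _ _ (hv0 s) haw k l).
have vT : mx_value T s (bdg az + ad *m bdg aw).
  by rewrite HT; apply: mx_value_add vMz (mx_value_mul had vMw).
rewrite (mx_value_uniq hA vT) mulmxDl -mulmxA.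
apply: vn_comb.
- exact: bigmax_ge0.
- by apply: mulr_ge0 => //; exact: bigmax_ge0.
- apply: bdg_norm => [i|i|i y]; [exact: a0|exact: bigmax_ub|exact: (halpha i).2.2 w wr _ (haz i) y].
apply: le_trans (hdelta.2.2 w wr ad had _) _.
rewrite exprMn -[X in _ <= X]mulrA; apply: ler_wpM2l; first exact: exprn_ge0.
apply: bdg_norm => [i|i|i y]; [exact: b0|exact: bigmax_ub|exact: (hbeta i).2.2 w wr _ (haw i) y].
Qed.
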